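(* Let $f:\mathbb{R}^n\times\mathbb{R}^m\to\mathbb{R}$ be twice continuously differentiable, convex in $x$ and concave in $y$. For $\nu>0$ let $z^*(\nu)$ be the saddle point of $\min_x\max_y f_\nu(x,y)$, $f_\nu(x,y)=f(x,y)+\frac{\nu}{2}\|x\|^2-\frac{\nu}{2}\|y\|^2$, and suppose there exist $C,\delta_0>0$ and $\theta\in(0,1]$ with $\|z^*(\nu_1)-z^*(\nu_2)\|\le C|\nu_1-\nu_2|^\theta$ for all $0<\nu_1,\nu_2<\delta_0$. Then for any sequence $\{\nu_k\}$ of positive numbers with $\lim_{k\to\infty}\nu_k=0$, the sequence $\{z^*(\nu_k)\}$ has a unique limit point $z^*=\lim_{k\to\infty}z^*(\nu_k)$, and $z^*$ is a saddle point of $\min_{x}\max_{y}f(x,y)$. *)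

(* Defs.v *)
From HB Require Import structures.
From mathcomp Require Import all_boot all_order all_algebra.
From mathcomp Require Import all_classical all_reals all_analysis.
Set Implicit Arguments. Unset Strict Implicit. Unset Printing Implicit Defensive.
Import Order.TTheory GRing.Theory Num.Theory.
Import numFieldNormedType.Exports.
Local Open Scope ring_scope.
Local Open Scope classical_set_scope.

Definition sqnorm (R : realType) (n : nat) (x : 'rV[R]_n) : R :=
  \sum_(i < n) x ord0 i ^+ 2.

Definition enorm2 (R : realType) (n m : nat) (z : 'rV[R]_n * 'rV[R]_m) : R :=
  Num.sqrt (sqnorm z.1 + sqnorm z.2).

(* Twice continuously differentiable on R^n x R^m, stated with directional
   derivatives: first and second directional derivatives exist everywhere
   and the second ones are continuous (taking coordinate directions, this is
   the usual "all second partials exist and are continuous" definition of C^2). *)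
Definition C2 (R : realType) (n m : nat) (g : 'rV[R]_n * 'rV[R]_m -> R) : Prop :=
  forall v w : 'rV[R]_n * 'rV[R]_m,
    (forall p, derivable g p v) /\
    (forall p, derivable (fun q => derive g q v) p w) /\
    continuous (fun p => derive (fun q => derive g q v) p w).

Definition convex_in_x (R : realType) (n m : nat) (f : 'rV[R]_n -> 'rV[R]_m -> R) :=
  forall (y : 'rV[R]_m) (x1 x2 : 'rV[R]_n) (t : R), 0 <= t -> t <= 1 ->
    f ((1 - t) *: x1 + t *: x2) y <= (1 - t) * f x1 y + t * f x2 y.

Definition concave_in_y (R : realType) (n m : nat) (f : 'rV[R]_n -> 'rV[R]_m -> R) :=
  forall (x : 'rV[R]_n) (y1 y2 : 'rV[R]_m) (t : R), 0 <= t -> t <= 1 ->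
    (1 - t) * f x y1 + t * f x y2 <= f x ((1 - t) *: y1 + t *: y2).

Definition saddle_point (R : realType) (n m : nat) (f : 'rV[R]_n -> 'rV[R]_m -> R)
  (z : 'rV[R]_n * 'rV[R]_m) : Prop :=
  forall (x : 'rV[R]_n) (y : 'rV[R]_m), f z.1 y <= f z.1 z.2 /\ f z.1 z.2 <= f x z.2.

Definition freg (R : realType) (n m : nat) (f : 'rV[R]_n -> 'rV[R]_m -> R) (nu : R)
  (x : 'rV[R]_n) (y : 'rV[R]_m) : R :=
  f x y + nu / 2 * sqnorm x - nu / 2 * sqnorm y.

(* Main.v *)
Require Import Defs.
From HB Require Import structures.
From mathcomp Require Import all_boot all_order all_algebra.
From mathcomp Require Import all_classical all_reals all_analysis.
From mathcomp Require Import ring lra.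
Import Order.TTheory GRing.Theory Num.Theory.
Import numFieldNormedType.Exports.
Local Open Scope ring_scope.
Local Open Scope classical_set_scope.

Section Cube.
Variables (R : realType) (n : nat) (phi : 'rV[R]_n -> R).
Hypothesis cvx : forall (x1 x2 : 'rV[R]_n) (t : R), 0 <= t -> t <= 1 ->
    phi ((1 - t) *: x1 + t *: x2) <= (1 - t) * phi x1 + t * phi x2.
Variable x0 : 'rV[R]_n.

Definition vtx (s : {ffun 'I_n -> bool}) : 'rV[R]_n :=
  x0 + \row_i (if s i then 1 else -1).

Definition Kb : R := \big[Num.max / phi x0]_(s : {ffun 'I_n -> bool}) phi (vtx s).

Lemma cube_bound_k (k : nat) : forall p : 'rV[R]_n,
  (forall i, `|p ord0 i - x0 ord0 i| <= 1) ->
  (forall i : 'I_n, (k <= i)%N -> `|p ord0 i - x0 ord0 i| = 1) -> phi p <= Kb.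
Proof.
elim: k => [|k IH] p hp hk.
  pose s := [ffun i => p ord0 i - x0 ord0 i == 1].
  have -> : p = vtx s.
    apply/rowP => i; rewrite /vtx !mxE ffunE.
    have := hk i (leq0n _).
    have [h|ne] := eqVneq (p ord0 i - x0 ord0 i) 1; first by lra.
    move=> /eqP; rewrite eqr_norml ler01 andbT => /orP[/eqP h'|/eqP h']; lra.
  by rewrite /Kb; exact: (le_bigmax _ (fun s => phi (vtx s)) s).
have [kn|kn] := ltnP k n; last first.
  apply: IH => // i ki.
  by have := leq_ltn_trans kn (leq_ltn_trans ki (ltn_ord i)); rewrite ltnn.
pose i0 : 'I_n := Ordinal kn.
pose a := p ord0 i0 - x0 ord0 i0.
pose e : 'rV[R]_n := delta_mx ord0 i0.
pose pm := p + (-1 - a) *: e.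
pose pp := p + (1 - a) *: e.
pose t := (a + 1) / 2.
have ha : `|a| <= 1 by apply: hp.
have [t0 t1] : 0 <= t /\ t <= 1.
  by move: ha; rewrite ler_norml /t => /andP[h1 h2]; split; lra.
have -> : p = (1 - t) *: pm + t *: pp.
  apply/rowP => j; rewrite !mxE.
  by rewrite /t; field.
have hc := cvx pm pp t t0 t1.
have hpm : phi pm <= Kb.
  apply: IH => i; rewrite /pm !mxE eqxx /=;
    (case: eqP => [->|ne]; [rewrite /= mulr1 /a| rewrite /= mulr0 addr0]).
  - by move=> *; rewrite [X in `|X|](_ : _ = -1) ?normrN ?normr1 ?lexx //; ring.
  - by apply: hp.
  - by move=> *; rewrite [X in `|X|](_ : _ = -1) ?normrN ?normr1 ?lexx //; ring.
  - move=> ki; apply: hk; rewrite ltn_neqAle ki andbT.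
    by apply/negP => /eqP h; apply: ne; apply/val_inj.
have hpp : phi pp <= Kb.
  apply: IH => i; rewrite /pp !mxE eqxx /=;
    (case: eqP => [->|ne]; [rewrite /= mulr1 /a| rewrite /= mulr0 addr0]).
  - by move=> *; rewrite [X in `|X|](_ : _ = 1) ?normr1 ?lexx //; ring.
  - by apply: hp.
  - by move=> *; rewrite [X in `|X|](_ : _ = 1) ?normr1 ?lexx //; ring.
  - move=> ki; apply: hk; rewrite ltn_neqAle ki andbT.
    by apply/negP => /eqP h; apply: ne; apply/val_inj.
have ht1 : 0 <= 1 - t by lra.
have := ler_wpM2l ht1 hpm; have := ler_wpM2l t0 hpp. move: hc. lra.
Qed.


Lemma entry_le_norm (d : 'rV[R]_n) i : `|d ord0 i| <= `|d|.
Proof.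
rewrite [`|d|]/Num.Def.normr /= mx_normrE.
exact: (le_bigmax _ (fun ij : 'I_1 * 'I_n => `|d ij.1 ij.2|) (ord0, i)).
Qed.

Lemma upper_loc (d : 'rV[R]_n) r : 0 < r -> r <= 1 -> `|d| <= r ->
  phi (x0 + d) <= (1 - r) * phi x0 + r * Kb.
Proof.
move=> r0 r1 dr.
pose q := x0 + r^-1 *: d.
have hq : phi q <= Kb.
  apply: (cube_bound_k n) => [i|i]; last by rewrite leqNgt ltn_ord.
  rewrite /q !mxE addrC addrK normrM gtr0_norm ?invr_gt0 //.
  rewrite ler_pdivrMl // mulr1; exact: le_trans (entry_le_norm d i) dr.
have -> : x0 + d = (1 - r) *: x0 + r *: q.
  apply/rowP => j; rewrite /q !mxE; field.
  by rewrite gt_eqF.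
have r1' : 0 <= 1 - r by lra.
have := cvx x0 q r (ltW r0) r1.
have := ler_wpM2l (ltW r0) hq.
lra.
Qed.

Lemma loc_bound (d : 'rV[R]_n) r : 0 < r -> r <= 1 -> `|d| <= r ->
  `|phi (x0 + d) - phi x0| <= r * (Kb - phi x0).
Proof.
move=> r0 r1 dr.
have h1 := upper_loc d r r0 r1 dr.
have h2 : phi (x0 + - d) <= (1 - r) * phi x0 + r * Kb.
  by apply: upper_loc; rewrite ?normrN.
have h3 : phi x0 <= (1 - 2^-1) * phi (x0 + d) + 2^-1 * phi (x0 + - d).
  have E : x0 = (1 - 2^-1) *: (x0 + d) + 2^-1 *: (x0 + - d) :> 'rV[R]_n.
    by apply/rowP => j; rewrite !mxE; field.
  rewrite {1}E; apply: cvx; lra.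
rewrite ler_norml; apply/andP; split; lra.
Qed.

Lemma convex_cont_seq (u : nat -> 'rV[R]_n) :
  u @ \oo --> x0 -> (phi \o u) @ \oo --> phi x0.
Proof.
move=> hu; apply/cvgrPdist_le => e e0.
pose B := `|Kb - phi x0| + 1.
have B0 : 0 < B by rewrite /B ltr_pwDr.
pose r := Num.min 1 (e / B).
have r0 : 0 < r by rewrite /r lt_min ltr01 divr_gt0.
have r1 : r <= 1 by rewrite /r ge_min lexx.
have reB : r <= e / B by rewrite /r ge_min lexx orbT.
have := hu; move/cvgrPdist_le => /(_ r r0) hr.
apply: filterS hr => k hk /=.
have -> : u k = x0 + (u k - x0) by rewrite addrC subrK.
rewrite distrC.
apply: le_trans (loc_bound (u k - x0) r r0 r1 _) _; first by rewrite distrC.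
have hKB : Kb - phi x0 <= B by rewrite /B; have := ler_norm (Kb - phi x0); lra.
apply: le_trans (ler_wpM2l (ltW r0) hKB) _.
by rewrite -ler_pdivlMr.
Qed.

End Cube.
Arguments convex_cont_seq {R n phi} cvx {x0 u}.

Lemma sqnorm_ge0 (R : realType) n (x : 'rV[R]_n) : 0 <= sqnorm x.
Proof. by apply: sumr_ge0 => i _; apply: sqr_ge0. Qed.
Arguments sqnorm_ge0 {R n}.


Lemma entry_le_sq (R : realType) n (x : 'rV[R]_n) j : x ord0 j ^+ 2 <= sqnorm x.
Proof.
rewrite /sqnorm (bigD1 j) //= lerDl.
by apply: sumr_ge0 => i _; apply: sqr_ge0.
Qed.
Arguments entry_le_sq {R n}.


Lemma fst_le_enorm2 (R : realType) n m (z : 'rV[R]_n * 'rV[R]_m) : `|z.1| <= enorm2 z.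
Proof.
rewrite [`|z.1|]/Num.Def.normr /= mx_normrE.
apply: bigmax_le => [|ij _]; first exact: sqrtr_ge0.
rewrite /enorm2 -sqrtr_sqr ler_sqrt; last by apply: addr_ge0; apply: sqnorm_ge0.
rewrite (ord1 ij.1).
have := entry_le_sq z.1 ij.2; have := sqnorm_ge0 z.2; lra.
Qed.
Arguments fst_le_enorm2 {R n m}.


Lemma snd_le_enorm2 (R : realType) n m (z : 'rV[R]_n * 'rV[R]_m) : `|z.2| <= enorm2 z.
Proof.
rewrite [`|z.2|]/Num.Def.normr /= mx_normrE.
apply: bigmax_le => [|ij _]; first exact: sqrtr_ge0.
rewrite /enorm2 -sqrtr_sqr ler_sqrt; last by apply: addr_ge0; apply: sqnorm_ge0.
rewrite (ord1 ij.1).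
have := entry_le_sq z.2 ij.2; have := sqnorm_ge0 z.1; lra.
Qed.
Arguments snd_le_enorm2 {R n m}.


Lemma cvg_of_cauchy (R : realType) k (a : nat -> 'rV[R]_k) :
  (forall e, 0 < e -> exists N, forall i, (N <= i)%N -> `|a N - a i| < e) ->
  a @ \oo --> lim (a @ \oo).
Proof.
move=> hc; apply: cauchy_cvg; apply: cauchy_exP => e e0.
have [N hN] := hc e e0.
exists (a N); exists N => // i /= hi.
by rewrite -ball_normE /ball_ /=; apply: hN.
Qed.
Arguments cvg_of_cauchy {R k}.


Theorem lemma5p4 (R : realType) (n m : nat) (f : 'rV[R]_n -> 'rV[R]_m -> R)
  (zs : R -> 'rV[R]_n * 'rV[R]_m) :
  C2 (fun z => f z.1 z.2) ->
  convex_in_x f -> concave_in_y f ->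
  (forall nu : R, 0 < nu -> saddle_point (freg f nu) (zs nu)) ->
  (exists (C d0 th : R), [/\ 0 < C, 0 < d0, 0 < th, th <= 1 &
     forall nu1 nu2 : R, 0 < nu1 -> nu1 < d0 -> 0 < nu2 -> nu2 < d0 ->
       enorm2 (zs nu1 - zs nu2) <= C * (`|nu1 - nu2| `^ th)]) ->
  forall nuk : nat -> R, (forall k, 0 < nuk k) -> nuk @ \oo --> 0 ->
  exists zstar : 'rV[R]_n * 'rV[R]_m,
    (zs \o nuk) @ \oo --> zstar /\ saddle_point f zstar.
Proof.
move=> _ hcx hcc hsad [C [d0 [th [C0 d00 th0 th1 hH]]]] nuk nu0 hnu.
pose u := zs \o nuk.
have small : forall eta, 0 < eta -> exists N, forall k, (N <= k)%N -> nuk k < eta.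
  move=> eta eta0; have := hnu; move/cvgrPdist_lt => /(_ eta eta0) [N _ hN].
  exists N => k /hN /=; rewrite sub0r normrN gtr0_norm //.
have cp : forall e, 0 < e -> exists N, forall k, (N <= k)%N -> enorm2 (u N - u k) < e.
  move=> e e0.
  pose eta2 := (e / (2 * C)) `^ th^-1.
  have eta20 : 0 < eta2 by apply: powR_gt0; apply: divr_gt0 => //; lra.
  have eta30 : 0 < Num.min d0 eta2 by rewrite lt_min d00 eta20.
  have [N hN] := small (Num.min d0 eta2) eta30.
  exists N => k hk.
  have hNN := hN N (leqnn N); have hNk := hN k hk.
  move: hNN hNk; rewrite !lt_min => /andP[a1 a2] /andP[b1 b2].
  apply: le_lt_trans (hH _ _ (nu0 N) a1 (nu0 k) b1) _.
  have hab : `|nuk N - nuk k| <= eta2.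
    have := nu0 N; have := nu0 k => p1 p2.
    rewrite ler_norml; apply/andP; split; lra.
  have := ge0_ler_powR (ltW th0) _ _ hab.
  rewrite !nnegrE normr_ge0 ltW // => /(_ isT isT) hp.
  have : eta2 `^ th = e / (2 * C).
    rewrite /eta2 -powRrM mulVf ?gt_eqF // powRr1 //.
    by apply: divr_ge0; [lra|lra].
  move=> heta; rewrite heta in hp.
  apply: le_lt_trans (ler_wpM2l (ltW C0) hp) _.
  have -> : C * (e / (2 * C)) = e / 2 by field; lra.
  lra.
pose a := fun k => (u k).1.
pose b := fun k => (u k).2.
have ha : a @ \oo --> lim (a @ \oo).
  apply: cvg_of_cauchy => e e0; have [N hN] := cp e e0; exists N => i hi.
  exact: le_lt_trans (fst_le_enorm2 (u N - u i)) (hN i hi).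
have hb : b @ \oo --> lim (b @ \oo).
  apply: cvg_of_cauchy => e e0; have [N hN] := cp e e0; exists N => i hi.
  exact: le_lt_trans (snd_le_enorm2 (u N - u i)) (hN i hi).
set xs := lim (a @ \oo) in ha; set ys := lim (b @ \oo) in hb.
exists (xs, ys); split.
  have -> : zs \o nuk = (fun k => (a k, b k)).
    by apply: funext => k; rewrite /a /b /u /=; case: (zs (nuk k)).
  exact: (cvg_pair ha hb).
have hn2 : forall c : R, (fun k => nuk k / 2 * c) @ \oo --> 0.
  move=> c; rewrite -(mul0r c) -(mul0r 2^-1).
  by apply: cvgMr_tmp; apply: cvgMr_tmp; exact: hnu.
have key : forall x y, f xs y <= f x ys.
  move=> x y.
  pose psi := fun v => - f x v.
  have psicvx : forall (x1 x2 : 'rV[R]_m) (t : R), 0 <= t -> t <= 1 ->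
      psi ((1 - t) *: x1 + t *: x2) <= (1 - t) * psi x1 + t * psi x2.
    by move=> x1 x2 t t0 t1; have := hcc x x1 x2 t t0 t1; rewrite /psi; lra.
  have phicvx : forall (x1 x2 : 'rV[R]_n) (t : R), 0 <= t -> t <= 1 ->
      (fun v => f v y) ((1 - t) *: x1 + t *: x2) <=
      (1 - t) * (fun v => f v y) x1 + t * (fun v => f v y) x2.
    by move=> x1 x2 t t0 t1; apply: hcx.
  have hfb : (fun k => f x (b k)) @ \oo --> f x ys.
    have h2 := cvgN (convex_cont_seq psicvx hb).
    have -> : (fun k => f x (b k)) = - (psi \o b) by apply: funext => k; rewrite /psi /= opprK.
    have -> : f x ys = - psi ys by rewrite /psi opprK.
    exact: h2.
  have hfa : (fun k => f (a k) y) @ \oo --> f xs y.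
    exact: (convex_cont_seq phicvx ha).
  pose w := fun k => (f x (b k) + nuk k / 2 * sqnorm x) - (f (a k) y - nuk k / 2 * sqnorm y).
  have hw : forall k, 0 <= w k.
    move=> k; have [h1 _] := hsad (nuk k) (nu0 k) (a k) y.
    have [_ h2] := hsad (nuk k) (nu0 k) x (b k).
    move: h1 h2; rewrite /freg /w /a /b /u /=.
    have p1 : 0 <= nuk k / 2 * sqnorm (zs (nuk k)).1.
      by apply: mulr_ge0; [apply: divr_ge0; [apply: ltW|]|apply: sqnorm_ge0].
    have p2 : 0 <= nuk k / 2 * sqnorm (zs (nuk k)).2.
      by apply: mulr_ge0; [apply: divr_ge0; [apply: ltW|]|apply: sqnorm_ge0].
    lra.
  have hwL : w @ \oo --> (f x ys + 0) - (f xs y - 0).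
    apply: cvgB; [apply: cvgD; [exact: hfb|exact: hn2] | apply: cvgB; [exact: hfa|exact: hn2]].
  have hw' : \forall k \near \oo, [set r : R | 0 <= r] (w k).
    by exists 0%N => // k _; apply: hw.
  have := @closed_cvg _ _ _ _ w [set r : R | 0 <= r] (@closed_ge R 0) hw' _ hwL.
  rewrite /= !addr0 !subr0 => h; have := h eventually_filter; lra.
by move=> x y; split; [apply: key xs y | apply: key x ys].
Qed.
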